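(* Let $(X,r)$ be a finite non-degenerate solution and $a,a',b,b'\in A=A(X,r)$. (1) If $\sigma_a=\sigma_{a'}$ and $\lambda_a=\lambda_{a'}$, then $\lambda_{a\circ b}=\lambda_{a'\circ b}$, $\rho_{b\circ a}=\rho_{b\circ a'}$, $\sigma_{b\circ a}=\sigma_{b\circ a'}$, $\lambda_{a+b}=\lambda_{a'+b}$, $\rho_{a+b}=\rho_{a'+b}$ and $\sigma_{a+b}=\sigma_{a'+b}$. (2) If $\sigma_b=\sigma_{b'}$ and $\lambda_b=\lambda_{b'}$, then $\lambda_{a\circ b}=\lambda_{a\circ b'}$, $\rho_{b\circ a}=\rho_{b'\circ a}$, $\sigma_{b\circ a}=\sigma_{b'\circ a}$, $\lambda_{a+b}=\lambda_{a+b'}$, $\rho_{a+b}=\rho_{a+b'}$ and $\sigma_{a+b}=\sigma_{a+b'}$.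
   Context: A set-theoretic solution $(X,r)$ of the Yang--Baxter equation: $X$ non-empty, $r\colon X\times X\to X\times X$ satisfying $(r\times\mathrm{id})(\mathrm{id}\times r)(r\times\mathrm{id})=(\mathrm{id}\times r)(r\times\mathrm{id})(\mathrm{id}\times r)$; write $r(x,y)=(\lambda_x(y),\rho_y(x))$; non-degenerate means $r$ bijective and all $\lambda_x,\rho_y$ bijective. Put $\sigma_y(x)=\lambda_y\rho_{\lambda_x^{-1}(y)}(x)$. Let $M$ be the monoid with presentation $\langle X\mid x\circ y=\lambda_x(y)\circ\rho_y(x)\ (x,y\in X)\rangle$ and $A$ the monoid $\langle X\mid x+y=y+\sigma_y(x)\ (x,y\in X)\rangle$. The following known structure is used: there is a bijection $M\to A$ fixing $X$; identifying $M$ and $A$ through it, the set $A$ carries two monoid operations $\circ$ and $+$ with common identity, and maps $a\mapsto\lambda_a$ (a monoid morphism $(A,\circ)\to\mathrm{Aut}(A,+)$), $a\mapsto\rho_a$ (a monoid anti-morphism $(A,\circ)\to\mathrm{Sym}(A)$) and $a\mapsto\sigma_a$ (a monoid anti-morphism $(A,+)\to\mathrm{Aut}(A,+)$), extending the given maps on $X$, such that for all $a,b,c\in A$: $a\circ b=a+\lambda_a(b)$, $a\circ b=\lambda_a(b)\circ\rho_b(a)$, $a+b=b+\sigma_b(a)$, $\sigma_{\lambda_a(b)}\lambda_a=\lambda_a\sigma_b$, $\lambda_a\lambda_b=\lambda_{\lambda_a(b)}\lambda_{\rho_b(a)}$, and $\sigma_b(a)=\lambda_b\rho_{\lambda_a^{-1}(b)}(a)$.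 All these maps are bijections of $A$ mapping $X$ onto $X$. *)

(* Defs.v *)
From mathcomp Require Import all_boot.
Set Implicit Arguments. Unset Strict Implicit. Unset Printing Implicit Defensive.

(* A set-theoretic solution on X is encoded by lamX, rhoX : X -> X -> X with
   r(x,y) = (lamX x y, rhoX y x). *)
Section Defs.
Variable X : Type.
Variables lamX rhoX : X -> X -> X.

Definition rXX (p : X * X) : X * X := (lamX p.1 p.2, rhoX p.2 p.1).
Definition r12 (t : X * X * X) : X * X * X :=
  let p := rXX (t.1.1, t.1.2) in (p.1, p.2, t.2).
Definition r23 (t : X * X * X) : X * X * X :=
  let p := rXX (t.1.2, t.2) in (t.1.1, p.1, p.2).

Definition is_YBE_solution : Prop :=
  forall t, r12 (r23 (r12 t)) = r23 (r12 (r23 t)).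

Definition nondegenerate : Prop :=
  bijective rXX /\ (forall x, bijective (lamX x)) /\ (forall y, bijective (rhoX y)).

(* sigX y x = lamX y (rhoX (lamX x ^-1 y) x), written with y := lamX x z *)
Definition is_sigma (sigX : X -> X -> X) : Prop :=
  forall x z, sigX (lamX x z) x = lamX (lamX x z) (rhoX z x).
End Defs.

Definition is_monoid (T : Type) (op : T -> T -> T) (e : T) : Prop :=
  associative op /\ left_id e op /\ right_id e op.

Definition presented_by (X T : Type) (op : T -> T -> T) (e : T) (g : X -> T)
    (rel : X -> X -> X * X) : Prop :=
  is_monoid op e /\
  (forall x y, op (g x) (g y) = op (g (rel x y).1) (g (rel x y).2)) /\
  (forall (N : Type) (opN : N -> N -> N) (eN : N) (h : X -> N),
     is_monoid opN eN ->
     (forall x y, opN (h x) (h y) = opN (h (rel x y).1) (h (rel x y).2)) ->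
     exists! f : T -> N,
       (f e = eN /\ forall a b, f (op a b) = opN (f a) (f b)) /\
       forall x, f (g x) = h x).

(* The structure (A, o, +, lambda, rho, sigma) of the structure monoid
   A = A(X,r) as described in the context, with the bijection M -> A
   used as an identification (A carries both presentations via iota). *)
Definition structure_algebra (X : Type) (lamX rhoX sigX : X -> X -> X)
    (A : Type) (iota : X -> A) (comp add : A -> A -> A) (e : A)
    (lam rho sig : A -> A -> A) : Prop :=
  presented_by comp e iota (fun x y => (lamX x y, rhoX y x)) /\
  presented_by add e iota (fun x y => (y, sigX y x)) /\
  (forall a, bijective (lam a)) /\
  (forall a b c, lam a (add b c) = add (lam a b) (lam a c)) /\
  (forall c, lam e c = c) /\
  (forall a b c, lam (comp a b) c = lam a (lam b c)) /\
  (forall a, bijective (rho a)) /\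
  (forall c, rho e c = c) /\
  (forall a b c, rho (comp a b) c = rho b (rho a c)) /\
  (forall a, bijective (sig a)) /\
  (forall a b c, sig a (add b c) = add (sig a b) (sig a c)) /\
  (forall c, sig e c = c) /\
  (forall a b c, sig (add a b) c = sig b (sig a c)) /\
  (forall x y, lam (iota x) (iota y) = iota (lamX x y)) /\
  (forall x y, rho (iota y) (iota x) = iota (rhoX y x)) /\
  (forall x y, sig (iota y) (iota x) = iota (sigX y x)) /\
  (forall a b, comp a b = add a (lam a b)) /\
  (forall a b, comp a b = comp (lam a b) (rho b a)) /\
  (forall a b, add a b = add b (sig b a)) /\
  (forall a b c, sig (lam a b) (lam a c) = lam a (sig b c)) /\
  (forall a b c, lam a (lam b c) = lam (lam a b) (lam (rho b a) c)) /\
  (* sig_b(a) = lam_b rho_{lam_a^{-1}(b)}(a), written with b := lam_a c *)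
  (forall a c, sig (lam a c) a = lam (lam a c) (rho c a)).

(* Main.v *)
Require Import Defs.
From mathcomp Require Import all_boot fingroup perm.
From Stdlib Require Import ProofIrrelevance FunctionalExtensionality.
Lemma T_iter (X : finType) (lamX rhoX : X -> X -> X) :
  is_YBE_solution lamX rhoX -> nondegenerate lamX rhoX ->
  exists Tf : X -> X, (forall z, lamX z (Tf z) = z) /\ exists n, forall z, iter n.+1 Tf z = z.
Proof.
move=> ybe [_ [lbij rbij]].
pose Tf z := odflt z [pick t | lamX z t == z].
have TfP : forall z, lamX z (Tf z) = z.
  move=> z; rewrite /Tf; case: pickP => [t /eqP //|H].
  case: (lbij z) => g gK Kg; move: (H (g z)); by rewrite Kg eqxx.
have surj : forall t, exists w, Tf w = t.
  move=> t; case: (rbij t) => gr grK Kgr.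
  set s := gr t; set w := lamX s t.
  have Hs : rhoX t s = t by rewrite /s Kgr.
  case: (lbij t) => gt gtK Kgt.
  have Y := ybe (s, t, gt t).
  move: Y; rewrite /r12 /r23 /rXX /= Hs Kgt => Y.
  have Y1 := f_equal (fun p => p.1.1) Y; simpl in Y1.
  have Hw : lamX w t = w by rewrite /w Y1.
  exists w; case: (lbij w) => g gK Kg.
  by rewrite -[Tf w]gK TfP -{1}Hw gK.
pose G t := odflt t [pick w | Tf w == t].
have GK : forall t, Tf (G t) = t.
  move=> t; rewrite /G; case: pickP => [w /eqP //|H].
  case: (surj t) => w Hw; move: (H w); by rewrite Hw eqxx.
have Ginj : injective G by move=> x y Hxy; rewrite -(GK x) Hxy GK.
case: (injF_bij Ginj) => Gi GiK KGi.
have TfE : forall w, Tf w = Gi w by move=> w; rewrite -{1}(KGi w) GK.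
have Tinj : injective Tf by move=> x y; rewrite !TfE; apply: (can_inj KGi).
exists Tf; split => //.
set p := perm Tinj.
exists (#[p]%g.-1) => z.
have := f_equal (fun q : {perm X} => q z) (expg_order p).
rewrite permX perm1 prednK ?order_gt0 //.
by rewrite (eq_iter (permE Tinj)).
Qed.

Lemma pres_ind (X A : Type) (comp : A -> A -> A) (e : A) (iota : X -> A) rel :
  presented_by comp e iota rel ->
  forall P : A -> Prop, P e -> (forall x, P (iota x)) ->
  (forall a b, P a -> P b -> P (comp a b)) -> forall a, P a.
Proof.
move=> [[cA [c1 c2]] [crel U]] P Pe Pi Pc.
pose N := {a : A | P a}.
have sigE : forall u v : N, proj1_sig u = proj1_sig v -> u = v.
  move=> [u pu] [v pv] /= E; subst v; f_equal; apply: proof_irrelevance.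
pose opN (u v : N) : N := exist _ (comp (proj1_sig u) (proj1_sig v))
   (Pc _ _ (proj2_sig u) (proj2_sig v)).
pose eN : N := exist _ e Pe.
pose h x : N := exist _ (iota x) (Pi x).
have mN : is_monoid opN eN.
  split; first by move=> u v w; apply: sigE => /=; rewrite cA.
  by split => u; apply: sigE => /=; rewrite ?c1 ?c2.
have rN : forall x y, opN (h x) (h y) = opN (h (rel x y).1) (h (rel x y).2).
  by move=> x y; apply: sigE => /=; rewrite crel.
case: (U N opN eN h mN rN) => f [[[fe fc] fi] _].
have mA : is_monoid comp e by [].
case: (U A comp e iota mA crel) => F [_ Funiq].
have E1 : F = (fun a => proj1_sig (f a)).
  apply: Funiq; split; last by move=> x; rewrite fi.
  by split; [rewrite fe | move=> a b; rewrite fc].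
have E2 : F = id by apply: Funiq.
move=> a; have := proj2_sig (f a).
have -> : proj1_sig (f a) = a by have := f_equal (fun g => g a) E1; rewrite E2 => <-.
done.
Qed.

Theorem lemma2p2 (X : finType) (lamX rhoX sigX : X -> X -> X)
    (A : Type) (iota : X -> A) (comp add : A -> A -> A) (e : A)
    (lam rho sig : A -> A -> A) :
  is_YBE_solution lamX rhoX ->
  nondegenerate lamX rhoX ->
  is_sigma lamX rhoX sigX ->
  structure_algebra lamX rhoX sigX iota comp add e lam rho sig ->
  forall a a' b b' : A,
    (sig a = sig a' -> lam a = lam a' ->
       (lam (comp a b) = lam (comp a' b) /\
           rho (comp b a) = rho (comp b a') /\
           sig (comp b a) = sig (comp b a') /\
           lam (add a b) = lam (add a' b) /\
           rho (add a b) = rho (add a' b) /\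
           sig (add a b) = sig (add a' b))) /\
    (sig b = sig b' -> lam b = lam b' ->
       (lam (comp a b) = lam (comp a b') /\
           rho (comp b a) = rho (comp b' a) /\
           sig (comp b a) = sig (comp b' a) /\
           lam (add a b) = lam (add a b') /\
           rho (add a b) = rho (add a b') /\
           sig (add a b) = sig (add a b'))).
Proof.
move=> ybe nd _ SA.
case: (@T_iter X lamX rhoX ybe nd) => Tf [TfP [n Hn]].
case: SA => Hc [Ha [Lbij [Ladd [Le [Lcomp [Rbij [Re [Rcomp [Sbij [Sadd [Se [Sadd2
  [LX [RX [SX [Dcomp [Crho [Acomm [SL [LL SR]]]]]]]]]]]]]]]]]]]].
have ind := @pres_ind X A comp e iota _ Hc.
have Linj : forall a, injective (lam a) by move=> a; case: (Lbij a) => g K _; exact: can_inj K.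
have LclX : forall a x, exists z, lam a (iota x) = iota z.
  apply: (ind (fun a => forall x, exists z, lam a (iota x) = iota z)).
  - by move=> x; exists x; rewrite Le.
  - by move=> y x; exists (lamX y x); rewrite LX.
  - move=> a b Ha1 Hb1 x; case: (Hb1 x) => z Hz; case: (Ha1 z) => z' Hz'.
    by exists z'; rewrite Lcomp Hz Hz'.
have RclX : forall a x, exists z, rho a (iota x) = iota z.
  apply: (ind (fun a => forall x, exists z, rho a (iota x) = iota z)).
  - by move=> x; exists x; rewrite Re.
  - by move=> y x; exists (rhoX y x); rewrite RX.
  - move=> a b Ha1 Hb1 x; case: (Ha1 x) => z Hz; case: (Hb1 z) => z' Hz'.
    by exists z'; rewrite Rcomp Hz Hz'.
have Tresp : forall z1 z2, iota z1 = iota z2 -> iota (Tf z1) = iota (Tf z2).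
  move=> z1 z2 E; apply: (Linj (iota z1)).
  by rewrite LX TfP {2}E LX TfP.
have Tresp_iter : forall k z1 z2, iota z1 = iota z2 ->
    iota (iter k Tf z1) = iota (iter k Tf z2).
  by elim=> [//|k IH] z1 z2 E /=; apply: Tresp; apply: IH.
have Tkey : forall z1 z2 t, lam (iota z1) t = iota z1 -> lam (iota z2) t = iota z2 ->
    iota z1 = iota z2.
  move=> z1 z2 t H1 H2.
  have E1 : t = iota (Tf z1) by apply: (Linj (iota z1)); rewrite H1 LX TfP.
  have E2 : t = iota (Tf z2) by apply: (Linj (iota z2)); rewrite H2 LX TfP.
  rewrite -(Hn z1) -(Hn z2) !iterSr.
  by apply: Tresp_iter; rewrite -E1 -E2.
have step3 : forall a a' x, sig a = sig a' -> lam a = lam a' ->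
    rho a (iota x) = rho a' (iota x).
  move=> a a' x Es El.
  case: (Lbij (iota x)) => gx gxK Kgx.
  case: (Lbij a) => ga gaK Kga.
  set t := ga (sig a (gx (iota x))).
  have key : forall c, sig c = sig a -> lam c = lam a -> lam (rho c (iota x)) t = rho c (iota x).
    move=> c Ec Elc.
    set w := lam (iota x) c; set v := rho c (iota x).
    have E1 : sig w (iota x) = lam w v by rewrite /w /v SR.
    have E2 : forall d, lam (iota x) (lam c d) = lam w (lam v d) by move=> d; rewrite LL.
    have E3 : sig w (iota x) = lam (iota x) (sig c (gx (iota x))).
      by rewrite -SL Kgx.
    apply: (Linj w); rewrite -E2 -E1 E3 Elc /t Kga Ec //.
  case: (RclX a x) => z Hz; case: (RclX a' x) => z' Hz'.
  rewrite Hz Hz'; apply: (Tkey z z' t); rewrite -?Hz -?Hz'; apply: key => //.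
have step4 : forall y a a', sig a = sig a' -> lam a = lam a' ->
    sig (lam y a) = sig (lam y a') /\ lam (lam y a) = lam (lam y a').
  apply: (ind (fun y => forall a a', sig a = sig a' -> lam a = lam a' ->
    sig (lam y a) = sig (lam y a') /\ lam (lam y a) = lam (lam y a'))).
  - by move=> a a' Es El; rewrite !Le.
  - move=> x a a' Es El; case: (Lbij (iota x)) => gx gxK Kgx.
    split; apply: functional_extensionality => c.
      by rewrite -(Kgx c) !SL Es.
    have E2 : forall a0 d, lam (iota x) (lam a0 d) =
       lam (lam (iota x) a0) (lam (rho a0 (iota x)) d) by move=> ? ?; rewrite LL.
    case: (Lbij (rho a (iota x))) => gv gvK Kgv.
    have Hv := step3 a a' x Es El.
    by rewrite -(Kgv c) -E2 El E2 -Hv.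
  - move=> y1 y2 H1 H2 a a' Es El; rewrite !Lcomp.
    case: (H2 a a' Es El) => Es2 El2; exact: H1.
have K : forall a a', sig a = sig a' -> lam a = lam a' -> rho a = rho a'.
  move=> a a' Es El; apply: functional_extensionality => y.
  case: (step4 y a a' Es El) => Es4 El4.
  apply: (Linj (lam y a)); rewrite -SR Es4 El4 SR //.
move=> a a' b b'; split => Es El.
- have [gb gbK Kgb] : bijective (lam a) by apply: Lbij.
  have Eab : forall a0, lam a0 = lam a -> add a0 b = comp a0 (gb b).
    by move=> a0 E0; rewrite Dcomp E0 Kgb.
  have Ka := K a a' Es El.
  split; first by apply: functional_extensionality => c; rewrite !Lcomp El.
  split; first by apply: functional_extensionality => c; rewrite !Rcomp Ka.
  split.
    case: (step4 b a a' Es El) => Es4 _.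
    by apply: functional_extensionality => c; rewrite !Dcomp !Sadd2 Es4.
  split; first by rewrite (Eab a) // (Eab a') //; apply: functional_extensionality => c; rewrite !Lcomp El.
  split; first by rewrite (Eab a) // (Eab a') //; apply: functional_extensionality => c; rewrite !Rcomp Ka.
  by apply: functional_extensionality => c; rewrite !Sadd2 Es.
- have [gb gbK Kgb] : bijective (lam b) by apply: Lbij.
  have Eab : forall b0, lam b0 = lam b -> sig b0 = sig b -> add a b0 = comp b0 (gb (sig b a)).
    by move=> b0 E0 S0; rewrite Acomm Dcomp E0 S0 Kgb.
  have Kb := K b b' Es El.
  split; first by apply: functional_extensionality => c; rewrite !Lcomp El.
  split; first by apply: functional_extensionality => c; rewrite !Rcomp Kb.
  split; first by apply: functional_extensionality => c; rewrite !Dcomp !Sadd2 Es El.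
  split; first by rewrite (Eab b) // (Eab b') //; apply: functional_extensionality => c; rewrite !Lcomp El.
  split; first by rewrite (Eab b) // (Eab b') //; apply: functional_extensionality => c; rewrite !Rcomp Kb.
  by apply: functional_extensionality => c; rewrite !Sadd2 Es.
Qed.
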